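(* Let $n_1,n_2$ be coprime positive integers with $n_2<n_1$ and $n_1>1$, and let $r_0$ be a real number with $0\le r_0<1$. Define $a_0,\dots,a_L$, $n_1,\dots,n_{L+2}$, $b_0,b_1,\dots$, $r_0,r_1,\dots$ and $d_i$ as in the context. Let $k$ be a positive integer with $k<L$, and assume $a_i=b_i$ for all $0\le i\le k$. Then: (i) if $k<L-1$ and $|d_k|<\frac{1}{n_{k+1}(n_{k+1}-1)}$, then $a_{k+1}=b_{k+1}$; (ii) if $k=L-1$ and $|d_{L-1}|<\frac{1}{n_L(n_L+1)}$, then $a_L=b_L$ or $a_L-1=b_L$.
   Context: Expansion of $n_2/n_1$ (Euclidean algorithm): set $a_0=0$ and, for $i=1,2,\dots$, $a_i=\lfloor n_i/n_{i+1}\rfloor$ and $n_{i+2}=n_i-a_in_{i+1}$, stopping at the index $L$ with $n_{L+2}=0$; then $n_{L+1}=1$ (by coprimality), $n_L=a_L\ge 2$, and $n_2/n_1=[0,a_1,\dots,a_L]$, i.e. $\frac{n_i}{n_{i+1}}=a_i+\frac{n_{i+2}}{n_{i+1}}$ for $1\le i\le L$. Expansion of $r_0$: set $b_0=\lfloor r_0\rfloor=0$ and, for $i\ge1$, as long as $r_{i-1}\neq0$, $b_i=\lfloor 1/r_{i-1}\rfloor$ and $r_i=1/r_{i-1}-b_i$ (so $\frac{1}{r_{i-1}}=b_i+r_i$ with $0\le r_i<1$). For each index $i\le L$ for which $r_i$ is defined, set $d_i=r_i-\frac{n_{i+2}}{n_{i+1}}$. (The conclusion includes that the relevant $b_{k+1}$,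 resp. $b_L$, is defined.) *)

(* Defs.v *)
From HB Require Import structures.
From mathcomp Require Import all_boot all_order all_algebra.
From mathcomp Require Import reals.
Set Implicit Arguments. Unset Strict Implicit. Unset Printing Implicit Defensive.
Import Order.TTheory GRing.Theory Num.Theory.
Local Open Scope ring_scope.

(* Euclidean algorithm on n2/n1.  npair n1 n2 j = (n_{j+1}, n_{j+2}). *)
Fixpoint npair (n1 n2 : nat) (j : nat) : nat * nat :=
  match j with
  | 0 => (n1, n2)
  | j'.+1 => let p := npair n1 n2 j' in (p.2, (p.1 %% p.2)%N)
  end.

(* nn n1 n2 i = n_i  (meaningful for i >= 1). *)
Definition nn (n1 n2 : nat) (i : nat) : nat := (npair n1 n2 i.-1).1.

Definition aa (n1 n2 : nat) (i : nat) : nat :=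
  if i is 0 then 0%N else (nn n1 n2 i %/ nn n1 n2 i.+1)%N.

Fixpoint rr (R : realType) (r0 : R) (i : nat) : option R :=
  match i with
  | 0 => Some r0
  | i'.+1 => match rr r0 i' with
             | Some r => if r == 0 then None
                         else Some (r^-1 - (Num.floor (r^-1))%:~R)
             | None => None
             end
  end.

Definition bb (R : realType) (r0 : R) (i : nat) : option int :=
  match i with
  | 0 => Some (Num.floor r0)
  | i'.+1 => match rr r0 i' with
             | Some r => if r == 0 then None else Some (Num.floor (r^-1))
             | None => None
             end
  end.

(* Main.v *)
Require Import Defs.
From HB Require Import structures.
From mathcomp Require Import all_boot all_order all_algebra.
From mathcomp Require Import reals ring lra zify.
Import Order.TTheory GRing.Theory Num.Theory.
Local Open Scope ring_scope.

Lemma coreA (R : realType) (u P Q A S : R) :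
  1 <= S -> S + 1 <= P -> 1 <= A -> Q = A * P + S ->
  `|u - P / Q| < (Q * (Q - 1))^-1 ->
  0 < u /\ A <= u^-1 < A + 1.
Proof.
move=> hS hP hA hQ.
have hQ0 : 0 < Q by nra.
have hQ2 : 1 < Q by nra.
have hQ1 : 0 < Q * (Q - 1) by apply: mulr_gt0; lra.
rewrite ltr_norml => /andP [h1 h2].
have e : (Q * (Q - 1))^-1 * (Q * (Q-1)) = 1 by rewrite mulVf // gt_eqF.
have e2 : P / Q * (Q * (Q-1)) = P * (Q - 1) by field; rewrite gt_eqF.
have l1 : P * (Q - 1) - 1 < u * (Q * (Q-1)).
  have := ltr_pM2r hQ1 (- (Q * (Q - 1))^-1) (u - P/Q); rewrite h1 => /esym.
  by rewrite mulNr e mulrBl e2; lra.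
have l2 : u * (Q * (Q-1)) < P * (Q - 1) + 1.
  have := ltr_pM2r hQ1 (u - P/Q) ((Q * (Q - 1))^-1); rewrite h2 => /esym.
  by rewrite e mulrBl e2; lra.
have up : 0 < u by nra.
have c1 : A * u < 1 by nra.
have c2 : 1 < (A + 1) * u by nra.
split => //; apply/andP; split.
  by rewrite -[u^-1]mul1r ler_pdivlMr // ltW.
by rewrite -[u^-1]mul1r ltr_pdivrMr // mulrC.
Qed.
Lemma coreB (R : realType) (u P Q A : R) :
  1 <= P -> 2 <= A -> Q = A * P ->
  `|u - P / Q| < (Q * (Q + 1))^-1 ->
  0 < u /\ A - 1 < u^-1 < A + 1.
Proof.
move=> hP hA hQ.
have hQ2 : 1 < Q by nra.
have hQ1 : 0 < Q * (Q + 1) by apply: mulr_gt0; lra.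
rewrite ltr_norml => /andP [h1 h2].
have e : (Q * (Q + 1))^-1 * (Q * (Q+1)) = 1 by rewrite mulVf // gt_eqF.
have e2 : P / Q * (Q * (Q+1)) = P * (Q + 1).
  field. rewrite gt_eqF //. lra.
have l1 : P * (Q + 1) - 1 < u * (Q * (Q+1)).
  have := ltr_pM2r hQ1 (- (Q * (Q + 1))^-1) (u - P/Q); rewrite h1 => /esym.
  by rewrite mulNr e mulrBl e2; lra.
have l2 : u * (Q * (Q+1)) < P * (Q + 1) + 1.
  have := ltr_pM2r hQ1 (u - P/Q) ((Q * (Q + 1))^-1); rewrite h2 => /esym.
  by rewrite e mulrBl e2; lra.
have up : 0 < u by nra.
have h3 : Q + 1 <= P * (Q + 1) by nra.
have c1 : (A - 1) * u < 1 by nra.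
have c2 : 1 < (A + 1) * u by nra.
split => //; apply/andP; split.
  by rewrite -[u^-1]mul1r ltr_pdivlMr.
by rewrite -[u^-1]mul1r ltr_pdivrMr // mulrC.
Qed.

Lemma nnS2 n1 n2 i : (1 <= i)%N -> nn n1 n2 i.+2 = (nn n1 n2 i %% nn n1 n2 i.+1)%N.
Proof. by case: i. Qed.

Lemma nn2 n1 n2 : nn n1 n2 2 = n2.
Proof. by []. Qed.

Theorem lemma2 (R : realType) (n1 n2 : nat) (r0 : R) (L k : nat) :
  (0 < n1)%N -> (0 < n2)%N -> coprime n1 n2 -> (n2 < n1)%N -> (1 < n1)%N ->
  0 <= r0 -> r0 < 1 ->
  (* L is the stopping index: n_{L+2} = 0 and n_{i+2} <> 0 for 1 <= i < L *)
  (1 <= L)%N -> nn n1 n2 L.+2 = 0%N ->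
  (forall i, (1 <= i)%N -> (i < L)%N -> nn n1 n2 i.+2 <> 0%N) ->
  (0 < k)%N -> (k < L)%N ->
  (forall i, (i <= k)%N -> bb r0 i = Some (Posz (aa n1 n2 i))) ->
  ((k < L.-1)%N ->
     (exists rk, rr r0 k = Some rk /\
        `|rk - (nn n1 n2 k.+2)%:R / (nn n1 n2 k.+1)%:R|
          < ((nn n1 n2 k.+1)%:R * ((nn n1 n2 k.+1)%:R - 1))^-1) ->
     bb r0 k.+1 = Some (Posz (aa n1 n2 k.+1)))
  /\
  (k = L.-1 ->
     (exists rk, rr r0 L.-1 = Some rk /\
        `|rk - (nn n1 n2 L.+1)%:R / (nn n1 n2 L)%:R|
          < ((nn n1 n2 L)%:R * ((nn n1 n2 L)%:R + 1))^-1) ->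
     bb r0 L = Some (Posz (aa n1 n2 L)) \/
     bb r0 L = Some (Posz (aa n1 n2 L) - 1)).
Proof.
move=> _ n2p _ _ _ _ _ L1 hL hne k0 kL _.
split.
- move=> kL1 [u [hu hb]].
  set q := nn n1 n2 k.+1 in hb *.
  set p := nn n1 n2 k.+2 in hb *.
  have p0 : p <> 0%N by apply: hne.
  have h3 : nn n1 n2 k.+3 <> 0%N by apply: hne => //; lia.
  have hs : (q %% p <> 0)%N by rewrite -nnS2.
  have q0 : (0 < q)%N.
    by case: (posnP q) hs => // ->; rewrite mod0n.
  have pq : (p < q)%N by rewrite /p nnS2 // ltn_pmod.
  have sp : (q %% p < p)%N by rewrite ltn_pmod //; lia.
  have a1 : (0 < q %/ p)%N by rewrite divn_gt0; lia.
  have hq : q = (q %/ p * p + q %% p)%N by apply: divn_eq.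
  have := coreA _ u (p%:R) (q%:R) ((q %/ p)%:R) ((q %% p)%:R).
  have e1 : 1 <= (q %% p)%:R :> R by rewrite ler1n lt0n; apply/eqP.
  have e2 : (q %% p)%:R + 1 <= p%:R :> R by rewrite -[1]/(1%:R) -natrD ler_nat addn1.
  have e3 : 1 <= (q %/ p)%:R :> R by rewrite ler1n.
  have e4 : q%:R = (q %/ p)%:R * p%:R + (q %% p)%:R :> R by rewrite {1}hq natrD natrM.
  move=> /(_ e1 e2 e3 e4 hb).
  move=> [up /andP [f1 f2]].
  rewrite /= hu gt_eqF //; congr Some.
  apply: floor_def; rewrite /aa -/q -/p.
  by rewrite f1 intrD /= f2.
- move=> kL' [u [hu hb]].
  have L2 : (1 < L)%N by lia.
  set q := nn n1 n2 L in hb *.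
  set p := nn n1 n2 L.+1 in hb *.
  have p0 : p <> 0%N.
    have := hne L.-1; rewrite prednK; last by lia.
    by apply; lia.
  have hs : (q %% p = 0)%N by rewrite -nnS2 //; lia.
  have q0 : (0 < q)%N.
    rewrite /q; case: (ltnP 2 L) => h.
      rewrite -(subnK (ltnW h)) addn2 lt0n; apply/eqP; apply: hne; lia.
    by have -> : L = 2%N by lia.
  have pq : (p < q)%N by rewrite /p -(prednK L1) nnS2 ?prednK //; [apply: ltn_pmod | lia].
  have hq : q = (q %/ p * p)%N by rewrite {1}(divn_eq q p) hs addn0.
  have a1 : (1 < q %/ p)%N.
    case: (ltnP 1 (q %/ p)) => // h; exfalso.
    have : (q %/ p * p <= 1 * p)%N by rewrite leq_mul2r h orbT.
    lia.
  have := coreB _ u (p%:R) (q%:R) ((q %/ p)%:R).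
  have e1 : 1 <= p%:R :> R by rewrite ler1n lt0n; apply/eqP.
  have e3 : 2 <= (q %/ p)%:R :> R by rewrite ler_nat.
  have e4 : q%:R = (q %/ p)%:R * p%:R :> R by rewrite {1}hq natrM.
  move=> /(_ e1 e3 e4 hb).
  move=> [up /andP [f1 f2]].
  rewrite -(prednK L1) /= hu gt_eqF // /aa prednK //= -/q -/p.
  case: (lerP (q %/ p)%:R u^-1) => f3.
    left; congr Some; apply: floor_def.
    by rewrite f3 intrD /= f2.
  right; congr Some; apply: floor_def.
  rewrite subrK intrB /= f3 andbT.
  by apply: ltW.
Qed.
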